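(* Let $d\ge3$ and let $(X_{t,1},\dots,X_{t,d})$, $t=1,\dots,T$, be i.i.d. binary random vectors, each following a determinantal point process with correlation kernel $K_0^*$, where $K_0^*$ is real symmetric with all eigenvalues in $(0,1)$, all entries of $K_0^*$ are nonzero, and $K^*_{0,1i}>0$ for $i=2,\dots,d$. Define the estimator $\widehat{K^*_T}$ (a symmetric matrix) by $\widehat{K^*_{ii}}=\frac1T\sum_{t=1}^T X_{t,i}$; for $i<j$, $\widehat{|K^*_{ij}|}=\sqrt{-\widehat{\mathrm{Cov}}(X_i,X_j)}$ with $-\widehat{\mathrm{Cov}}(X_i,X_j)=\widehat{K^*_{ii}}\widehat{K^*_{jj}}-\frac1T\sum_{t=1}^T X_{t,i}X_{t,j}$; $\widehat{K^*_{1j}}=\widehat{|K^*_{1j}|}$ for $j\ge2$; for $1<i<j\le d$, $\widehat{K^*_{ij}}=\widehat{\mathrm{sgn}}_{ij}\cdot\widehat{|K^*_{ij}|}$, where $$\widehat{\mathrm{sgn}}_{ij}=\mathrm{sgn}\Big(\tfrac1T\textstyle\sum_{t}X_{t,1}X_{t,i}X_{t,j}-\widehat{K^*_{11}}\widehat{K^*_{ii}}\widehat{K^*_{jj}}+\widehat{K^*_{11}}\widehat{|K^*_{ij}|}^2+\widehat{K^*_{ii}}\widehat{|K^*_{1j}|}^2+\widehat{K^*_{jj}}\widehat{|K^*_{1i}|}^2\Big);$$ and $\widehat{K^*_{ji}}=\widehat{K^*_{ij}}$. Then $\widehat{K^*_T}\to K_0^*$ almost surely as $T\to\infty$. In particular,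 almost surely, for all $T$ large enough: $-\widehat{\mathrm{Cov}}(X_i,X_j)\ge0$ for all $i<j$ (so $\widehat{|K^*_{ij}|}$ is well defined), and $\mathrm{sgn}(\widehat{K^*_{ij}})=\mathrm{sgn}(K^*_{0,ij})$ for all $i,j$.
   Context: A binary random vector $(X_1,\dots,X_d)$ follows a determinantal point process with correlation kernel $K$ if $\mathbb{P}[X_j=1\ \forall j\in s]=\det K_s$ for every $s\subseteq\{1,\dots,d\}$, where $K_s$ is the principal submatrix of $K$ with rows and columns in $s$. $\mathrm{sgn}(x)$ is $1,-1,0$ according as $x>0$, $x<0$, $x=0$. For finitely many $T$ the defining expressions may be undefined (negative quantity under a square root, or zero sign); the value of the estimator on that event is fixed by an arbitrary convention and plays no role in the statement. *)

(* Defs.v *)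
From HB Require Import structures.
From mathcomp Require Import all_boot all_order all_algebra.
From mathcomp Require Import all_classical all_reals all_analysis.
Set Implicit Arguments. Unset Strict Implicit. Unset Printing Implicit Defensive.
Import Order.TTheory GRing.Theory Num.Theory.
Local Open Scope classical_set_scope.
Local Open Scope ring_scope.

Definition principal_minor (R : comRingType) (d : nat) (K : 'M[R]_d)
  (s : {set 'I_d}) : R :=
  \det (\matrix_(a < #|s|, b < #|s|) K (enum_val a) (enum_val b)).

Definition is_DPP (R : realType) (dT : measure_display) (Omega : measurableType dT)
  (P : probability Omega R) (d : nat) (K : 'M[R]_d) (Y : Omega -> 'I_d -> bool) :=
  forall s : {set 'I_d},
    P [set w | forall j, j \in s -> Y w j] = (principal_minor K s)%:E.

Definition mutually_independent (R : realType) (dT : measure_display)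
  (Omega : measurableType dT) (P : probability Omega R) (d : nat)
  (X : nat -> Omega -> 'I_d -> bool) :=
  forall (s : seq nat) (A : nat -> set ('I_d -> bool)), uniq s ->
    fine (P (\big[setI/setT]_(t <- s) (X t @^-1` A t)))
    = \prod_(t <- s) fine (P (X t @^-1` A t)).

Section Estimator.
Variables (R : realType) (Omega : Type) (d : nat).
Variable X : nat -> Omega -> 'I_d -> bool.

(* the sample uses X 0, ..., X (T-1) *)
Definition mean1 (T : nat) (w : Omega) (i : 'I_d) : R :=
  (\sum_(t < T) (X t w i)%:R) / T%:R.
Definition mean2 (T : nat) (w : Omega) (i j : 'I_d) : R :=
  (\sum_(t < T) (X t w i && X t w j)%:R) / T%:R.
Definition mean3 (T : nat) (w : Omega) (i j k : 'I_d) : R :=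
  (\sum_(t < T) [&& X t w i, X t w j & X t w k]%:R) / T%:R.

Definition negcov T w i j : R := mean1 T w i * mean1 T w j - mean2 T w i j.

(* \hat |K_ij| (Num.sqrt of a negative number is 0: arbitrary convention) *)
Definition absK T w i j : R := Num.sqrt (negcov T w i j).

(* \hat sgn_ij, using the index 0 (= the paper's index 1) *)
Definition sgnhat (i0 : 'I_d) T w (i j : 'I_d) : R :=
  Num.sg (mean3 T w i0 i j - mean1 T w i0 * mean1 T w i * mean1 T w j
          + mean1 T w i0 * absK T w i j ^+ 2
          + mean1 T w i * absK T w i0 j ^+ 2
          + mean1 T w j * absK T w i0 i ^+ 2).

Definition Kupper T w (i j : 'I_d) : R :=
  if val i == 0%N then absK T w i j
  else sgnhat (Ordinal (leq_ltn_trans (leq0n i) (ltn_ord i))) T w i j * absK T w i j.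

Definition Khat T w : 'M[R]_d :=
  \matrix_(i, j) (if i == j then mean1 T w i
                  else if (val i < val j)%N then Kupper T w i j
                  else Kupper T w j i).
End Estimator.

(* Main.v *)
Require Import Defs.
From HB Require Import structures.
From mathcomp Require Import all_boot all_order all_algebra.
From mathcomp Require Import all_classical all_reals all_analysis.
From mathcomp Require Import ring lra.
Import Order.TTheory GRing.Theory Num.Theory.
Import numFieldTopology.Exports numFieldNormedType.Exports.
Set Implicit Arguments. Unset Strict Implicit.
Local Open Scope classical_set_scope.
Local Open Scope ring_scope.

Section Fin.
Variable (R : realFieldType) (p : R).
Hypothesis p0 : 0 <= p.
Hypothesis p1 : p <= 1.

Definition qw (b : bool) : R := if b then p else 1 - p.
Definition Yc (b : bool) : R := b%:R - p.
Definition Wz n (z : {ffun 'I_n -> bool}) : R := \prod_(t < n) qw (z t).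

Lemma factorW n (h : 'I_n -> bool -> R) :
  \sum_(z : {ffun 'I_n -> bool}) \prod_(t < n) (qw (z t) * h t (z t))
  = \prod_(t < n) \sum_(b : bool) qw b * h t b.
Proof. by rewrite bigA_distr_bigA. Qed.

Lemma prod_if1 n (a : 'I_n) (F : 'I_n -> R) :
  \prod_(t < n) (if t == a then F t else 1) = F a.
Proof. by rewrite -big_mkcond big_pred1_eq. Qed.

Lemma normYc b : `|Yc b| <= 1.
Proof.
case: b; rewrite /Yc /=.
  rewrite ger0_norm ?subr_ge0 // gerBl //.
by rewrite sub0r normrN ger0_norm.
Qed.

Definition hh n (a b c e : 'I_n) (t : 'I_n) (x : bool) : R :=
  (if t == a then Yc x else 1) * (if t == b then Yc x else 1) *
  (if t == c then Yc x else 1) * (if t == e then Yc x else 1).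

Arguments hh {n}.

Lemma norm_if (t a : bool) x : `|if t then Yc x else 1| <= 1.
Proof. by case: t; rewrite ?normr1 ?normYc. Qed.

Lemma norm_hh n (a b c e t : 'I_n) x : `|hh a b c e t x| <= 1.
Proof.
rewrite /hh !normrM.
have h1 := norm_if (t == a) x; have h2 := norm_if (t == b) x.
have h3 := norm_if (t == c) x; have h4 := norm_if (t == e) x.
have g1 := normr_ge0 (if t == a then Yc x else 1).
have g2 := normr_ge0 (if t == b then Yc x else 1).
have g3 := normr_ge0 (if t == c then Yc x else 1).
have g4 := normr_ge0 (if t == e then Yc x else 1).
by rewrite !mulr_ile1 ?mulr_ge0.
Qed.

Lemma moment_term n (a b c e : 'I_n) :
  \sum_(z : {ffun 'I_n -> bool}) Wz z * (Yc (z a) * Yc (z b) * Yc (z c) * Yc (z e))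
  = \prod_(t < n) \sum_(x : bool) qw x * hh a b c e t x.
Proof.
rewrite -factorW; apply: eq_bigr => z _.
rewrite big_split /=; congr (_ * _).
rewrite /hh !big_split /=.
by rewrite !(prod_if1 _ (fun t => Yc (z t))).
Qed.

Lemma norm_m n (a b c e t : 'I_n) : `|\sum_(x : bool) qw x * hh a b c e t x| <= 1.
Proof.
rewrite big_bool /qw /=.
have q0 : 0 <= 1 - p by rewrite subr_ge0.
have h1 := norm_hh a b c e t true; have h2 := norm_hh a b c e t false.
apply: le_trans (ler_normD _ _) _.
rewrite (normrM p) (normrM (1 - p)) (ger0_norm p0) (ger0_norm q0).
have : p * `|hh a b c e t true| <= p * 1 by apply: ler_wpM2l.
have : (1 - p) * `|hh a b c e t false| <= (1 - p) * 1 by apply: ler_wpM2l.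
rewrite !mulr1 => A B. apply: le_trans (lerD B A) _; rewrite addrC subrK.
by [].
Qed.

Lemma m_zero n (a b c e t : 'I_n) :
  ((t == a) + (t == b) + (t == c) + (t == e) = 1)%N ->
  \sum_(x : bool) qw x * hh a b c e t x = 0.
Proof.
rewrite big_bool /qw /hh /Yc /=.
case: (t == a); case: (t == b); case: (t == c); case: (t == e) => //= _;
rewrite ?mulr1 ?mul1r; ring.
Qed.

Lemma unique_idx n (a b c e : 'I_n) :
  ~~ [|| (a == b) && (c == e), (a == c) && (b == e) | (a == e) && (b == c)] ->
  [|| ((a == a) + (a == b) + (a == c) + (a == e) == 1)%N,
      ((b == a) + (b == b) + (b == c) + (b == e) == 1)%N,
      ((c == a) + (c == b) + (c == c) + (c == e) == 1)%N |
      ((e == a) + (e == b) + (e == c) + (e == e) == 1)%N].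
Proof.
rewrite !eqxx [b == a]eq_sym [c == a]eq_sym [c == b]eq_sym [e == a]eq_sym [e == b]eq_sym [e == c]eq_sym.
by repeat (case: eqP => ?); try congruence.
Qed.

Lemma sumeq n (x : 'I_n) (F : 'I_n -> R) : \sum_(y < n) (x == y)%:R * F y = F x.
Proof.
rewrite (bigD1 x) //= eqxx mul1r big1 ?addr0 // => y /negbTE.
by rewrite eq_sym => ->; rewrite mul0r.
Qed.

Lemma sumeq' n (x : 'I_n) (F : 'I_n -> R) : \sum_(y < n) (y == x)%:R * F y = F x.
Proof. by rewrite -(sumeq x); apply: eq_bigr => y _; rewrite eq_sym. Qed.

Lemma expand4 n (F : 'I_n -> R) :
  (\sum_(t < n) F t) ^+ 4 =
  \sum_(a < n) \sum_(b < n) \sum_(c < n) \sum_(e < n) (F a * F b * F c * F e).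
Proof.
have -> : (\sum_(t < n) F t) ^+ 4 =
   (\sum_(t < n) F t) * ((\sum_(t < n) F t) * ((\sum_(t < n) F t) * (\sum_(t < n) F t))).
  by rewrite !exprS expr0 mulr1.
rewrite big_distrl; apply: eq_bigr => a _ /=.
rewrite [X in _ * X]big_distrl big_distrr; apply: eq_bigr => b _ /=.
rewrite [X in _ * (_ * X)]big_distrl /= big_distrr /= big_distrr /=; apply: eq_bigr => c _ /=.
rewrite big_distrr /= big_distrr /= big_distrr /=; apply: eq_bigr => e _ /=.
by rewrite !mulrA.
Qed.

Definition pairing n (a b c e : 'I_n) : R :=
  ((a == b) && (c == e))%:R + ((a == c) && (b == e))%:R + ((a == e) && (b == c))%:R.

Lemma term_le n (a b c e : 'I_n) :
  \sum_(z : {ffun 'I_n -> bool}) Wz z * (Yc (z a) * Yc (z b) * Yc (z c) * Yc (z e))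
  <= pairing a b c e.
Proof.
rewrite moment_term.
have [H|H] := boolP [|| (a == b) && (c == e), (a == c) && (b == e) | (a == e) && (b == c)].
  apply: le_trans (ler_norm _) _; rewrite normr_prod.
  have P1 : \prod_(t < n) `|\sum_(x : bool) qw x * hh a b c e t x| <= 1.
    by apply: prodr_ile1 => t _; rewrite normr_ge0 norm_m.
  apply: le_trans P1 _.
  rewrite /pairing; case/or3P: H => /andP[/eqP -> /eqP ->]; rewrite ?eqxx /=.
  - by rewrite -addrA lerDl addr_ge0.
  - by rewrite addrAC lerDr addr_ge0.
  - by rewrite lerDr addr_ge0.
have : exists t : 'I_n, ((t == a) + (t == b) + (t == c) + (t == e) = 1)%N.
  case/or4P: (unique_idx H) => /eqP h; [exists a|exists b|exists c|exists e]; exact: h.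
case=> t /m_zero ht.
rewrite (bigD1 t) //= ht mul0r /pairing.
by rewrite !addr_ge0.
Qed.

Lemma sum1 n (x : 'I_n) : \sum_(y < n) (x == y)%:R = 1 :> R.
Proof. by rewrite -[RHS](sumeq x (fun=> 1)); apply: eq_bigr => y _; rewrite mulr1. Qed.

Lemma sum1' n (x : 'I_n) : \sum_(y < n) (y == x)%:R = 1 :> R.
Proof. by rewrite -[RHS](sum1 x); apply: eq_bigr => y _; rewrite eq_sym. Qed.

Lemma natr_andb (x y : bool) : (x && y)%:R = x%:R * y%:R :> R.
Proof. by case: x; case: y => /=; rewrite ?mulr1 ?mul0r ?mulr0. Qed.

Lemma sum4_split n (F G : 'I_n -> 'I_n -> 'I_n -> 'I_n -> R) :
  \sum_(a < n) \sum_(b < n) \sum_(c < n) \sum_(e < n) (F a b c e + G a b c e)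
  = \sum_(a < n) \sum_(b < n) \sum_(c < n) \sum_(e < n) F a b c e +
    \sum_(a < n) \sum_(b < n) \sum_(c < n) \sum_(e < n) G a b c e.
Proof.
rewrite -big_split; apply: eq_bigr => a _ /=; rewrite -big_split; apply: eq_bigr => b _ /=.
by rewrite -big_split; apply: eq_bigr => c _ /=; rewrite -big_split.
Qed.

Lemma sum_pairing n :
  \sum_(a < n) \sum_(b < n) \sum_(c < n) \sum_(e < n) pairing a b c e = 3 * (n%:R) ^+ 2.
Proof.
rewrite /pairing !sum4_split.
have T1 : \sum_(a < n) \sum_(b < n) \sum_(c < n) \sum_(e < n) ((a == b) && (c == e))%:R
   = (n%:R) ^+ 2 :> R.
  transitivity (\sum_(a < n) \sum_(b < n) \sum_(c < n) ((a == b)%:R : R)).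
    apply: eq_bigr => a _; apply: eq_bigr => b _; apply: eq_bigr => c _.
    by rewrite (eq_bigr _ (fun e _ => natr_andb _ _)) -big_distrr /= sum1 mulr1.
  transitivity (\sum_(a < n) \sum_(b < n) ((a == b)%:R *+ n : R)).
    by apply: eq_bigr => a _; apply: eq_bigr => b _; rewrite sumr_const card_ord.
  transitivity (\sum_(a < n) (1 *+ n : R)).
    by apply: eq_bigr => a _; rewrite sumrMnl sum1.
  by rewrite sumr_const card_ord expr2 -mulr_natr mul1r mulr_natr.
have T2 : \sum_(a < n) \sum_(b < n) \sum_(c < n) \sum_(e < n) ((a == c) && (b == e))%:R
   = (n%:R) ^+ 2 :> R.
  transitivity (\sum_(a < n) \sum_(b < n) \sum_(c < n) ((a == c)%:R : R)).
    apply: eq_bigr => a _; apply: eq_bigr => b _; apply: eq_bigr => c _.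
    by rewrite (eq_bigr _ (fun e _ => natr_andb _ _)) -big_distrr /= sum1 mulr1.
  transitivity (\sum_(a < n) \sum_(b < n) (1 : R)).
    by apply: eq_bigr => a _; apply: eq_bigr => b _; rewrite sum1.
  transitivity (\sum_(a < n) (1 *+ n : R)).
    by apply: eq_bigr => a _; rewrite sumr_const card_ord.
  by rewrite sumr_const card_ord expr2 -mulr_natr mul1r mulr_natr.
have T3 : \sum_(a < n) \sum_(b < n) \sum_(c < n) \sum_(e < n) ((a == e) && (b == c))%:R
   = (n%:R) ^+ 2 :> R.
  transitivity (\sum_(a < n) \sum_(b < n) \sum_(c < n) ((b == c)%:R : R)).
    apply: eq_bigr => a _; apply: eq_bigr => b _; apply: eq_bigr => c _.
    rewrite (eq_bigr (fun e => (a == e)%:R * (b == c)%:R)); last first.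
      by move=> e _; rewrite natr_andb mulrC.
    by rewrite -big_distrl /= sum1 mul1r.
  transitivity (\sum_(a < n) \sum_(b < n) (1 : R)).
    by apply: eq_bigr => a _; apply: eq_bigr => b _; rewrite sum1.
  transitivity (\sum_(a < n) (1 *+ n : R)).
    by apply: eq_bigr => a _; rewrite sumr_const card_ord.
  by rewrite sumr_const card_ord expr2 -mulr_natr mul1r mulr_natr.
rewrite T1 T2 T3; ring.
Qed.

Lemma lerT (x y z : R) : x <= y -> y <= z -> x <= z.
Proof. exact: le_trans. Qed.

Lemma pull1 n (G : {ffun 'I_n -> bool} -> 'I_n -> R) :
  \sum_(z : {ffun 'I_n -> bool}) Wz z * \sum_(a < n) G z a
  = \sum_(a < n) \sum_(z : {ffun 'I_n -> bool}) Wz z * G z a.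
Proof. by under eq_bigr do rewrite big_distrr; exact: exchange_big. Qed.

Lemma moment4 n :
  \sum_(z : {ffun 'I_n -> bool}) Wz z * (\sum_(t < n) Yc (z t)) ^+ 4
  <= 3 * (n%:R) ^+ 2.
Proof.
under eq_bigr do rewrite expand4.
rewrite pull1 -sum_pairing; apply: ler_sum => a _.
rewrite pull1; apply: ler_sum => b _.
rewrite pull1; apply: ler_sum => c _.
rewrite pull1; apply: ler_sum => e _.
exact: term_le.
Qed.

Lemma Wz_ge0 n (z : {ffun 'I_n -> bool}) : 0 <= Wz z.
Proof.
apply: prodr_ge0 => t _; rewrite /qw; case: (z t) => //.
by rewrite subr_ge0.
Qed.

Lemma sumYc n (z : {ffun 'I_n -> bool}) :
  \sum_(t < n) Yc (z t) = \sum_(t < n) (z t)%:R - n%:R * p.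
Proof. by rewrite /Yc sumrB sumr_const card_ord mulr_natl. Qed.

Lemma tail_bound n (eps : R) : 0 < eps -> (0 < n)%N ->
  \sum_(z : {ffun 'I_n -> bool} | eps * n%:R <= `|\sum_(t < n) (z t)%:R - n%:R * p|) Wz z
  <= 3 / ((n%:R) ^+ 2 * eps ^+ 4).
Proof.
move=> eps0 n0.
have n0' : 0 < n%:R :> R by rewrite ltr0n.
have K0 : 0 < (eps * n%:R) ^+ 4 by rewrite exprn_gt0 // mulr_gt0.
set K := (eps * n%:R) ^+ 4.
apply: (@lerT _ (\sum_(z : {ffun 'I_n -> bool}) Wz z * ((\sum_(t < n) Yc (z t)) ^+ 4 / K))).
  rewrite big_mkcond /=; apply: ler_sum => z _.
  have g0 : 0 <= Wz z * ((\sum_(t < n) Yc (z t)) ^+ 4 / K).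
    by rewrite mulr_ge0 ?Wz_ge0 // divr_ge0 ?exprn_even_ge0 // ltW.
  case: ifP => // H; apply: ler_peMr; first exact: Wz_ge0.
  rewrite ler_pdivlMr // mul1r sumYc.
  rewrite -(ger0_norm (exprn_even_ge0 _ _)) //= normrX.
  rewrite /K ler_pXn2r // nnegrE ?normr_ge0 //.
  by rewrite mulr_ge0 // ltW.
under eq_bigr do rewrite mulrA.
rewrite -big_distrl /=.
apply: (@lerT _ (3 * (n%:R) ^+ 2 / K)).
  by rewrite ler_pM2r ?invr_gt0 // moment4.
rewrite /K le_eqVlt; apply/orP; left; apply/eqP.
field.
by rewrite !gt_eqF.
Qed.

End Fin.

Section SLLN.
Context (R : realType) (dT : measure_display) (Omega : measurableType dT)
  (P : probability Omega R).
Variable f : nat -> Omega -> bool.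

Definition cyl n (z : {ffun 'I_n -> bool}) : set Omega :=
  \big[setI/setT]_(t < n) [set w | f t w == z t].

Lemma set_eqb t (b : bool) :
  [set w | f t w == b] = if b then [set w | f t w] else ~` [set w | f t w].
Proof.
by case: b; apply/seteqP; split => w /=; case: (f t w).
Qed.

Lemma mcyl (mf : forall t, measurable [set w | f t w]) n z : measurable (@cyl n z).
Proof.
apply: bigsetI_measurable => t _; rewrite set_eqb; case: (z t) => //.
exact: measurableC.
Qed.

Lemma Pcyl (mf : forall t, measurable [set w | f t w]) (p : R)
  (hp : forall t, P [set w | f t w] = p%:E)
  (hind : forall n (z : {ffun 'I_n -> bool}),
     fine (P (\big[setI/setT]_(t < n) [set w | f t w == z t]))
     = \prod_(t < n) fine (P [set w | f t w == z t]))
  n z : P (@cyl n z) = (Wz p z)%:E.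
Proof.
rewrite -[P _]fineK; last exact: (fin_num_measure P _ (mcyl mf z)).
congr EFin.
rewrite /cyl hind; apply: eq_bigr => t _; rewrite set_eqb /qw.
case: (z t) => /=; first by rewrite hp.
by rewrite probability_setC // hp -EFinB.
Qed.

Lemma measure_bigU (I : eqType) (s : seq I) (Q : pred I) (F : I -> set Omega) :
  (forall i, Q i -> measurable (F i)) ->
  (P (\big[setU/set0]_(i <- s | Q i) F i) <= \sum_(i <- s | Q i) P (F i))%E.
Proof.
elim: s => [|x s IH] mF; first by rewrite !big_nil measure0.
rewrite !big_cons; case: ifP => Qx; last exact: IH.
apply: le_trans (measureU2 _ _ _) _; first exact: mF.
  exact: bigsetU_measurable.
by rewrite leeD2l ?IH.
Qed.

Lemma inv_sq_step (x : R) : 0 < x ->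
  ((x + 1) ^+ 2)^-1 + (x + 1)^-1 <= x^-1.
Proof.
move=> x0.
have x1 : 0 < x + 1 by rewrite addr_gt0.
rewrite -subr_ge0.
have -> : x^-1 - (((x + 1) ^+ 2)^-1 + (x + 1)^-1) = (x * (x + 1) ^+ 2)^-1.
  by field; rewrite !gt_eqF.
by rewrite invr_ge0 ltW // mulr_gt0 // exprn_gt0.
Qed.

Lemma sum_inv_sq N : \sum_(k < N) ((k.+1%:R) ^+ 2)^-1 <= 2 :> R.
Proof.
have H : forall M, \sum_(k < M.+1) ((k.+1%:R) ^+ 2)^-1 <= 2 - (M.+1%:R)^-1 :> R.
  elim=> [|M IH].
    by rewrite big_ord_recr big_ord0 /= add0r expr1n invr1; lra.
  have E : (M.+2)%:R = M.+1%:R + 1 :> R by rewrite natr1.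
  rewrite big_ord_recr /= E.
  have := inv_sq_step (ltr0Sn R M).
  move: IH; set a := \sum_(i < M.+1) _.
  move: ((M.+1%:R + 1 : R) ^+ 2)^-1 (M.+1%:R + 1 : R)^-1 (M.+1%:R : R)^-1 => v w u.
  lra.
case: N => [|N]; first by rewrite big_ord0 ler0n.
apply: le_trans (H N) _.
by rewrite gerBl invr_ge0.
Qed.

Section withp.
Hypothesis mf : forall t, measurable [set w | f t w].
Variable p : R.
Hypothesis hp : forall t, P [set w | f t w] = p%:E.
Hypothesis hind : forall n (z : {ffun 'I_n -> bool}),
     fine (P (\big[setI/setT]_(t < n) [set w | f t w == z t]))
     = \prod_(t < n) fine (P [set w | f t w == z t]).

Lemma p_ge0 : 0 <= p.
Proof. by rewrite -lee_fin -(hp 0) measure_ge0. Qed.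

Lemma p_le1 : p <= 1.
Proof. by rewrite -lee_fin -(hp 0) probability_le1. Qed.

Definition badz n (eps : R) (z : {ffun 'I_n -> bool}) :=
  eps * n%:R <= `|\sum_(t < n) (z t)%:R - n%:R * p|.

Definition BadU n eps : set Omega :=
  \big[setU/set0]_(z : {ffun 'I_n -> bool} | badz eps z) cyl z.

Lemma mBadU n eps : measurable (BadU n eps).
Proof. by apply: bigsetU_measurable => z _; exact: mcyl. Qed.

Lemma P_BadU n eps : 0 < eps -> (0 < n)%N ->
  (P (BadU n eps) <= (3 / ((n%:R) ^+ 2 * eps ^+ 4))%:E)%E.
Proof.
move=> e0 n0; apply: le_trans.
  by apply: measure_bigU => z _; exact: mcyl.
under eq_bigr do rewrite (Pcyl mf hp hind).
rewrite sumEFin lee_fin.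
exact: (tail_bound p_ge0 p_le1).
Qed.

Lemma subBadU n eps w :
  eps * n%:R <= `|\sum_(t < n) (f t w)%:R - n%:R * p| -> BadU n eps w.
Proof.
move=> H; set z := [ffun t : 'I_n => f t w].
have bz : badz eps z.
  by rewrite /badz; under eq_bigr do rewrite ffunE.
rewrite /BadU (bigD1 z) //=; left.
rewrite /cyl; elim/big_ind: _ => //; try (by move=> A B HA HB; split).
by move=> t /=; rewrite ffunE.
Qed.

Lemma ae_eps eps : 0 < eps ->
  {ae P, forall w, exists N, forall k, (N <= k)%N ->
     `|\sum_(t < k.+1) (f t w)%:R - k.+1%:R * p| < eps * k.+1%:R}.
Proof.
move=> e0.
pose F := fun k => BadU k.+1 eps.
have mF : forall k, measurable (F k) by move=> k; exact: mBadU.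
pose c := 3 / eps ^+ 4.
have c0 : 0 <= c by rewrite divr_ge0 // exprn_ge0 // ltW.
have PF k : (P (F k) <= (c * (k.+1%:R ^+ 2)^-1)%:E)%E.
  apply: le_trans (P_BadU e0 (ltn0Sn k)) _; rewrite lee_fin le_eqVlt; apply/orP; left.
  apply/eqP; rewrite /c; field.
  by rewrite !gt_eqF // ltr0n.
have S : (\sum_(0 <= n <oo) P (F n) < +oo)%E.
  apply: (@le_lt_trans _ _ (2 * c)%:E); last exact: ltry.
  apply: lime_le.
    apply: ereal_nondecreasing_is_cvgn; apply: ereal_nondecreasing_series => n _ _.
    exact: measure_ge0.
  apply: nearW => n.
  apply: le_trans; first by apply: lee_sum => k _; exact: PF.
  rewrite sumEFin lee_fin -big_distrr /= mulrC big_mkord.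
  by rewrite ler_wpM2r // sum_inv_sq.
have L0 := lim_sup_set_cvg0 mF S.
exists (lim_sup_set F); split => //.
  apply: bigcap_measurable => // k _; exact: bigcup_measurable.
move=> w /= notQ n _.
apply: contrapT => H; apply: notQ; exists n => k nk.
rewrite ltNge; apply/negP => bad; apply: H; exists k => //.
exact: subBadU.
Qed.

Lemma slln_bool :
  {ae P, forall w, (fun n => (\sum_(t < n) (f t w)%:R) / n%:R) @ \oo --> p}.
Proof.
have e_pos m : 0 < (m.+1%:R : R)^-1 by rewrite invr_gt0 ltr0Sn.
have H := ae_foralln (fun m => ae_eps (e_pos m)).
apply: filterS H => w Hw.
apply/cvgrPdist_lt => e e0.
have [m _ /(_ m (leqnn m)) hm] := near_infty_natSinv_lt (PosNum e0).
have [N HN] := Hw m.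
exists N.+1 => // n /= Nn.
case: n Nn => [//|k] Nk.
have := HN k Nk.
set S := \sum_(t < k.+1) (f t w)%:R.
have n0 : 0 < k.+1%:R :> R by rewrite ltr0Sn.
have -> : p - S / k.+1%:R = - ((S - k.+1%:R * p) / k.+1%:R).
  by field; rewrite gt_eqF.
rewrite normrN normrM [`|_^-1|]gtr0_norm ?invr_gt0 // => h.
rewrite ltr_pdivrMr //.
apply: lt_trans h _.
by rewrite ltr_pM2r.
Qed.

End withp.
End SLLN.

Lemma det2 (R : comRingType) (F : nat -> nat -> R) :
  \det (\matrix_(a < 2, b < 2) F a b) = F 0 0 * F 1 1 - F 0 1 * F 1 0.
Proof.
rewrite (expand_det_row _ ord0) !big_ord_recl big_ord0 /cofactor !det_mx11 !mxE /=.
rewrite !expr0 !expr1; ring.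
Qed.

Lemma det3 (R : comRingType) (F : nat -> nat -> R) :
  \det (\matrix_(a < 3, b < 3) F a b) =
  F 0 0 * F 1 1 * F 2 2 - F 0 0 * F 1 2 * F 2 1 - F 0 1 * F 1 0 * F 2 2
  + F 0 1 * F 1 2 * F 2 0 + F 0 2 * F 1 0 * F 2 1 - F 0 2 * F 1 1 * F 2 0.
Proof.
rewrite (expand_det_row _ ord0) !big_ord_recl big_ord0 /cofactor.
rewrite !(expand_det_row _ ord0) !big_ord_recl big_ord0 /cofactor !det_mx11 !mxE /=.
rewrite !big_ord0 /bump /= !addn0 !add0n.
have E11 : (1 + 1 = 2)%N by [].
rewrite !E11 !addr0 !expr0 !expr1 expr2.
ring.
Qed.

Section Minors.
Variables (R : realType) (d : nat) (K : 'M[R]_d).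
Hypothesis Ksym : K^T = K.

Lemma Ks a b : K a b = K b a.
Proof. by rewrite -[in LHS]Ksym mxE. Qed.

Lemma pm_gen (s : {set 'I_d}) (Q : R -> Prop) :
  (forall m (h : 'I_m -> 'I_d), m = #|s| -> injective h -> (forall a, h a \in s) ->
     Q (\det (\matrix_(a, b) K (h a) (h b)))) -> Q (principal_minor K s).
Proof.
move=> H; rewrite /principal_minor; apply: H => //; [exact: enum_val_inj|exact: enum_valP].
Qed.

Lemma pm1 i : principal_minor K [set i] = K i i.
Proof.
apply: (pm_gen (Q := fun x => x = K i i)) => m h; rewrite cards1 => e hinj hs; subst m.
rewrite det_mx11 mxE.
by have /set1P -> := hs 0.
Qed.

Lemma pm2 i j : i != j -> principal_minor K [set i; j] = K i i * K j j - K i j ^+ 2.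
Proof.
move=> ij; apply: (pm_gen (Q := fun x => x = K i i * K j j - K i j ^+ 2)) => m h; rewrite cards2 ij => e hinj hs; subst m.
have -> : \matrix_(a, b) K (h a) (h b) =
          \matrix_(a < 2, b < 2) K (h (inord a)) (h (inord b)).
  by apply/matrixP => a b; rewrite !mxE !inord_val.
rewrite (det2 (fun x y => K (h (inord x)) (h (inord y)))).
have d01 : h (inord 0) != h (inord 1).
  by rewrite (inj_eq hinj) -(inj_eq val_inj) /= !inordK.
move: d01 (hs (inord 0)) (hs (inord 1)).
move: (h (inord 0)) (h (inord 1)) => u v.
rewrite !inE => uv.
case/orP => /eqP Hu; case/orP => /eqP Hv; subst u v; rewrite ?eqxx // in uv *;
rewrite ?(Ks j i); ring.
Qed.

Definition D3 a b c := K a a * K b b * K c c + 2 * K a b * K b c * K a c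
   - K a a * K b c ^+ 2 - K b b * K a c ^+ 2 - K c c * K a b ^+ 2.

Lemma pm3 i0 i j : i0 != i -> i0 != j -> i != j ->
  principal_minor K [set i0; i; j] = D3 i0 i j.
Proof.
move=> h0i h0j hij; apply: (pm_gen (Q := fun x => x = D3 i0 i j)) => m h.
move=> e hinj hs.
have {}e : m = 3%N.
  by rewrite e finset.setUC cardsU1 cards2 h0i !inE negb_or (eq_sym j i0) (eq_sym j i) h0j hij.
subst m.
have -> : \matrix_(a, b) K (h a) (h b) =
          \matrix_(a < 3, b < 3) K (h (inord a)) (h (inord b)).
  by apply/matrixP => a b; rewrite !mxE !inord_val.
rewrite (det3 (fun x y => K (h (inord x)) (h (inord y)))).
have d01 : h (inord 0) != h (inord 1).
  by rewrite (inj_eq hinj) -(inj_eq val_inj) /= !inordK.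
have d02 : h (inord 0) != h (inord 2).
  by rewrite (inj_eq hinj) -(inj_eq val_inj) /= !inordK.
have d12 : h (inord 1) != h (inord 2).
  by rewrite (inj_eq hinj) -(inj_eq val_inj) /= !inordK.
move: d01 d02 d12 (hs (inord 0)) (hs (inord 1)) (hs (inord 2)).
move: (h (inord 0)) (h (inord 1)) (h (inord 2)) => u v w.
rewrite !inE -!orbA /D3 => uv uw vw.
case/or3P => /eqP Hu; case/or3P => /eqP Hv; case/or3P => /eqP Hw; subst u v w;
  rewrite ?eqxx // in uv uw vw *;
  rewrite ?(Ks i i0) ?(Ks j i0) ?(Ks j i); ring.
Qed.

End Minors.

Section Conv.
Context (R : realType) (dT : measure_display) (Omega : measurableType dT)
  (P : probability Omega R) (d : nat) (K0 : 'M[R]_d)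
  (X : nat -> Omega -> 'I_d -> bool).
Hypothesis mX : forall t i, measurable [set w | X t w i].
Hypothesis indep : mutually_independent P X.
Hypothesis dpp : forall t, is_DPP P K0 (X t).

Definition alls (s : {set 'I_d}) (y : 'I_d -> bool) := [forall j in s, y j].

Lemma alls_set s t :
  [set w | alls s (X t w)] = \bigcap_(j in [set j | j \in s]) [set w | X t w j].
Proof.
apply/seteqP; split => w /=.
  by move/forallP => H j /= js; have := H j; rewrite js.
by move=> H; apply/forallP => j; apply/implyP => js; exact: H.
Qed.

Lemma conv_s s : {ae P, forall w,
  (fun n => (\sum_(t < n) (alls s (X t w))%:R) / n%:R) @ \oo --> principal_minor K0 s}.
Proof.
apply: (slln_bool (f := fun t w => alls s (X t w))).
- move=> t; rewrite alls_set; apply: fin_bigcap_measurable.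
    exact: finite_finset.
  by move=> j _; exact: mX.
- move=> t; rewrite -(dpp t s); congr (P _); apply/seteqP; split => w /=.
    by move/forallP => H j js; have := H j; rewrite js.
  by move=> H; apply/forallP => j; apply/implyP; exact: H.
- move=> n z.
  pose zz t := if insub t is Some o then z o else false.
  have := indep (fun t => [set y | alls s y == zz t]) (iota_uniq 0 n).
  have I : iota 0 n = index_iota 0 n by rewrite /index_iota subn0.
  rewrite I !big_mkord => H.
  have E : forall t : 'I_n, zz t = z t by move=> t; rewrite /zz valK.
  transitivity (fine (P (\big[setI/setT]_(t < n) (X t @^-1` [set y | alls s y == zz t])))).
    by congr (fine (P _)); apply: eq_bigr => t _; rewrite E.
  by rewrite H; apply: eq_bigr => t _; rewrite E.
Qed.

End Conv.

Section Det.
Variables (R : realType) (d : nat) (Omega : Type) (K : 'M[R]_d)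
  (X : nat -> Omega -> 'I_d -> bool) (w : Omega).
Hypothesis Ksym : K^T = K.
Hypothesis Knz : forall i j, K i j != 0.
Hypothesis Kpos : forall i j : 'I_d, val i = 0%N -> val j != 0%N -> 0 < K i j.
Hypothesis conv : forall s : {set 'I_d},
  (fun n => (\sum_(t < n) (alls s (X t w))%:R) / n%:R) @ \oo --> principal_minor K s.

Lemma cM (u v : nat -> R) (a b : R) : u @ \oo --> a -> v @ \oo --> b ->
  (fun n => u n * v n) @ \oo --> a * b.
Proof. exact: cvgM. Qed.
Lemma cB (u v : nat -> R) (a b : R) : u @ \oo --> a -> v @ \oo --> b ->
  (fun n => u n - v n) @ \oo --> a - b.
Proof. exact: cvgB. Qed.
Lemma cD (u v : nat -> R) (a b : R) : u @ \oo --> a -> v @ \oo --> b ->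
  (fun n => u n + v n) @ \oo --> a + b.
Proof. exact: cvgD. Qed.
Lemma cX (u : nat -> R) (a : R) : u @ \oo --> a -> (fun n => u n ^+ 2) @ \oo --> a ^+ 2.
Proof. by move=> h; rewrite expr2; under eq_fun do rewrite expr2; exact: cM. Qed.

Lemma alls1 (y : 'I_d -> bool) i : alls [set i] y = y i.
Proof.
apply/forallP/idP => [H|H j]; first by have := H i; rewrite inE eqxx.
by apply/implyP; rewrite inE => /eqP ->.
Qed.

Lemma alls2 (y : 'I_d -> bool) i j : alls [set i; j] y = y i && y j.
Proof.
apply/forallP/andP => [H|[H1 H2] k].
  by split; [have := H i | have := H j]; rewrite !inE eqxx ?orbT.
by apply/implyP; rewrite !inE => /orP[] /eqP ->.
Qed.

Lemma alls3 (y : 'I_d -> bool) a b c : alls [set a; b; c] y = [&& y a, y b & y c].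
Proof.
apply/forallP/and3P => [H|[H1 H2 H3] k].
  by split; [have := H a | have := H b | have := H c]; rewrite !inE eqxx ?orbT.
by apply/implyP; rewrite !inE -!orbA => /or3P[] /eqP ->.
Qed.

Lemma m1c i : (fun T => mean1 R X T w i) @ \oo --> K i i.
Proof.
rewrite -(pm1 K i).
have -> : (fun T => mean1 R X T w i) =
   (fun n => (\sum_(t < n) (alls [set i] (X t w))%:R) / n%:R).
  by apply/funext => n; rewrite /mean1; congr (_ / _); apply: eq_bigr => t _; rewrite alls1.
exact: conv.
Qed.

Lemma m2c i j : i != j ->
  (fun T => mean2 R X T w i j) @ \oo --> K i i * K j j - K i j ^+ 2.
Proof.
move=> ij; rewrite -(pm2 Ksym ij).
have -> : (fun T => mean2 R X T w i j) =
   (fun n => (\sum_(t < n) (alls [set i; j] (X t w))%:R) / n%:R).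
  by apply/funext => n; rewrite /mean2; congr (_ / _); apply: eq_bigr => t _; rewrite alls2.
exact: conv.
Qed.

Lemma m3c a b c : a != b -> a != c -> b != c ->
  (fun T => mean3 R X T w a b c) @ \oo --> D3 K a b c.
Proof.
move=> ab ac bc; rewrite -(pm3 Ksym ab ac bc).
have -> : (fun T => mean3 R X T w a b c) =
   (fun n => (\sum_(t < n) (alls [set a; b; c] (X t w))%:R) / n%:R).
  by apply/funext => n; rewrite /mean3; congr (_ / _); apply: eq_bigr => t _; rewrite alls3.
exact: conv.
Qed.

Lemma negcovc i j : i != j -> (fun T => negcov R X T w i j) @ \oo --> K i j ^+ 2.
Proof.
move=> ij.
have E : K i i * K j j - (K i i * K j j - K i j ^+ 2) = K i j ^+ 2 by ring.
rewrite -E; apply: cB; [apply: cM; exact: m1c | exact: m2c].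
Qed.

Lemma absKc i j : i != j -> (fun T => absK R X T w i j) @ \oo --> `|K i j|.
Proof.
move=> ij; rewrite -sqrtr_sqr.
exact: (continuous_cvg _ (@sqrt_continuous R (K i j ^+ 2)) (negcovc ij)).
Qed.

Lemma absK2c i j : i != j -> (fun T => absK R X T w i j ^+ 2) @ \oo --> K i j ^+ 2.
Proof. by move=> ij; rewrite -real_normK ?num_real //; apply: cX; exact: absKc. Qed.

Lemma sg_event (u : nat -> R) (l : R) : u @ \oo --> l -> l != 0 ->
  \forall n \near \oo, Num.sg (u n) = Num.sg l.
Proof.
move=> ul l0; have l0' : 0 < `|l| by rewrite normr_gt0.
move/cvgrPdist_lt : ul => /(_ _ l0'); apply: filterS => n hn.
have A : l - u n < `|l| by apply: le_lt_trans (ler_norm _) hn.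
have B : u n - l < `|l|.
  by apply: le_lt_trans (ler_norm _) _; rewrite distrC.
case: (ltrgtP l 0) => hl.
- rewrite (ltr0_norm hl) in A B.
  have hu : u n < 0 by move: A B hl; lra.
  by rewrite (ltr0_sg hl) (ltr0_sg hu).
- rewrite (gtr0_norm hl) in A B.
  have hu : 0 < u n by move: A B hl; lra.
  by rewrite (gtr0_sg hl) (gtr0_sg hu).
- by rewrite hl eqxx in l0.
Qed.

Lemma sgnhat_event (i0 i j : 'I_d) : i0 != i -> i0 != j -> i != j ->
  0 < K i0 i -> 0 < K i0 j ->
  \forall T \near \oo, sgnhat R X i0 T w i j = Num.sg (K i j).
Proof.
move=> h0i h0j hij p1 p2.
have L : (fun T => mean3 R X T w i0 i j
          - mean1 R X T w i0 * mean1 R X T w i * mean1 R X T w j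
          + mean1 R X T w i0 * absK R X T w i j ^+ 2
          + mean1 R X T w i * absK R X T w i0 j ^+ 2
          + mean1 R X T w j * absK R X T w i0 i ^+ 2) @ \oo -->
         2 * K i0 i * K i j * K i0 j.
  have E : D3 K i0 i j - K i0 i0 * K i i * K j j + K i0 i0 * K i j ^+ 2
     + K i i * K i0 j ^+ 2 + K j j * K i0 i ^+ 2 = 2 * K i0 i * K i j * K i0 j.
    by rewrite /D3; ring.
  rewrite -E.
  apply: cD; last by apply: cM; [exact: m1c | exact: absK2c].
  apply: cD; last by apply: cM; [exact: m1c | exact: absK2c].
  apply: cD; last by apply: cM; [exact: m1c | exact: absK2c].
  apply: cB; first exact: m3c.
  by apply: cM; [apply: cM|]; exact: m1c.
have nz : 2 * K i0 i * K i j * K i0 j != 0.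
  by rewrite !mulf_neq0 ?Knz ?gt_eqF // ?pnatr_eq0.
apply: filterS (sg_event L nz) => T hT.
rewrite /sgnhat hT !sgrM (gtr0_sg p1) (gtr0_sg p2) (gtr0_sg (ltr0Sn _ _)).
by rewrite !mul1r mulr1.
Qed.

Lemma kupper_c i j : (val i < val j)%N ->
  (fun T => Kupper R X T w i j) @ \oo --> K i j.
Proof.
move=> ij.
have hij : i != j by apply/eqP => e; rewrite e ltnn in ij.
have j0 : val j != 0%N by rewrite -lt0n (leq_ltn_trans _ ij).
rewrite /Kupper; case: eqP => i0.
  by rewrite -(gtr0_norm (Kpos i0 j0)); exact: absKc.
set o := Ordinal _.
have o0 : val o = 0%N by [].
have oi : o != i by apply/eqP => e; apply: i0; rewrite -e.
have oj : o != j by apply/eqP => e; apply/eqP: j0; rewrite -e.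
have i0' : val i != 0%N by apply/eqP.
have H := sgnhat_event oi oj hij (Kpos o0 i0') (Kpos o0 j0).
apply: cvg_trans (near_eq_cvg (f := fun T => Num.sg (K i j) * absK R X T w i j) _) _.
  by apply: filterS H => T ->.
rewrite {2}(numEsg (K i j)); apply: cM; first exact: cvg_cst.
exact: absKc.
Qed.

Lemma khat_c i j : (fun T => Khat R X T w i j) @ \oo --> K i j.
Proof.
have -> : (fun T => Khat R X T w i j) = fun T =>
   if i == j then mean1 R X T w i else if (val i < val j)%N then Kupper R X T w i j
   else Kupper R X T w j i.
  by apply/funext => T; rewrite mxE.
case: eqVneq => [<-|ij]; first exact: m1c.
case: ltnP => h; first exact: kupper_c.
rewrite (Ks Ksym i j); apply: kupper_c.
by rewrite ltn_neqAle h andbT; apply: contra ij => /eqP /val_inj ->.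
Qed.

Lemma det_main :
  (forall i j, (fun T : nat => Khat R X T w i j) @ \oo --> (K i j : R)) /\
  (\forall T \near \oo,
     (forall i j : 'I_d, (val i < val j)%N -> 0 <= negcov R X T w i j) /\
     (forall i j, Num.sg (Khat R X T w i j) = Num.sg (K i j))).
Proof.
split; first exact: khat_c.
have HA : \forall T \near \oo,
    forall i j : 'I_d, (val i < val j)%N -> 0 <= negcov R X T w i j.
  apply: filter_forall => i; apply: filter_forall => j.
  case: (ltnP (val i) (val j)) => h; last first.
    by apply: nearW.
  have hij : i != j by apply/eqP => e; rewrite e ltnn in h.
  have nz : K i j ^+ 2 != 0 by rewrite sqrf_eq0 Knz.
  apply: filterS (sg_event (negcovc hij) nz) => T hT _.
  by rewrite -sgr_ge0 hT sgr_ge0 sqr_ge0.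
have HB : \forall T \near \oo,
    forall i j : 'I_d, Num.sg (Khat R X T w i j) = Num.sg (K i j).
  apply: filter_forall => i; apply: filter_forall => j.
  by apply: filterS (sg_event (khat_c (i:=i) (j:=j)) (Knz i j)) => T ->.
by apply: filterS2 HA HB => T ha hb; split.
Qed.

End Det.

Theorem proposition4 (R : realType) (dT : measure_display) (Omega : measurableType dT)
  (P : probability Omega R) (d : nat) (K0 : 'M[R]_d)
  (X : nat -> Omega -> 'I_d -> bool) :
  (3 <= d)%N ->
  K0^T = K0 ->
  (forall a : R, eigenvalue K0 a -> 0 < a < 1) ->
  (forall i j, K0 i j != 0) ->
  (forall i j : 'I_d, val i = 0%N -> val j != 0%N -> 0 < K0 i j) ->
  (forall t i, measurable [set w | X t w i]) ->
  mutually_independent P X ->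
  (forall t, is_DPP P K0 (X t)) ->
  {ae P, forall w,
     (forall i j, (fun T : nat => Khat R X T w i j) @ \oo --> (K0 i j : R)) /\
     (\forall T \near \oo,
        (forall i j : 'I_d, (val i < val j)%N -> 0 <= negcov R X T w i j) /\
        (forall i j, Num.sg (Khat R X T w i j) = Num.sg (K0 i j)))}.
Proof.
move=> d3 Ksym eig Knz Kpos mX indep dpp.
have H : {ae P, forall w, forall s : {set 'I_d},
  (fun n => (\sum_(t < n) (alls s (X t w))%:R) / n%:R) @ \oo --> principal_minor K0 s}.
  by apply: filter_forall => s; exact: (conv_s mX indep dpp s).
apply: filterS H => w Hw.
exact: (det_main Ksym Knz Kpos Hw).
Qed.
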